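(* For $n>2$, let $Q=G_{n+1}^2/N$ where $N$ is the normal subgroup generated by all elements $a_{i(n+1)}a_{j(n+1)}a_{i(n+1)}^{-1}a_{j(n+1)}^{-1}$, $i,j\in\{1,\dots,n\}$. Then the assignment $\kappa(a_{ij})=a_{ij}$ for $\{i,j\}\subset\{1,\dots,n\}$ and $\kappa(\tau_i)=a_{i(n+1)}$ extends to a well-defined group homomorphism $\kappa\colon G_{n,\mathcal{D}}^2\to Q$.
   Context: $G_{N}^2$ is the group with generators $a_{ij}=a_{\{i,j\}}$ for $2$-element subsets $\{i,j\}\subset\{1,\dots,N\}$ and relations $a_{ij}^2=1$; $a_{ij}a_{kl}=a_{kl}a_{ij}$ for distinct $i,j,k,l$; $a_{ij}a_{ik}a_{jk}=a_{jk}a_{ik}a_{ij}$ for distinct $i,j,k$. $G_{n,\mathcal{D}}^2$ has generators $a_{ij}$ ($\{i,j\}\subset\{1,\dots,n\}$) and $\tau_i$ ($1\le i\le n$) with relations: $a_{ij}^2=1$; $a_{ij}a_{kl}=a_{kl}a_{ij}$ for distinct $i,j,k,l$; $a_{ij}a_{ik}a_{jk}=a_{jk}a_{ik}a_{ij}$ for distinct $i,j,k$; $\tau_i^2=1$; $\tau_i\tau_j=\tau_j\tau_i$; $\tau_i\tau_ja_{ij}\tau_j\tau_i=a_{ij}$; $a_{ij}\tau_k=\tau_ka_{ij}$ for distinct $i,j,k$. *)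

(* Defs.v *)
(* Groups given by presentations, modelled as words in the
   generators and their inverses modulo the congruence generated by free
   cancellation and the relators (i.e. modulo the normal closure of the relators). *)
From mathcomp Require Import all_boot.
Set Implicit Arguments. Unset Strict Implicit. Unset Printing Implicit Defensive.

(* a letter (x, b): generator x if b = false, its inverse x^-1 if b = true *)
Definition word (X : Type) := seq (X * bool).

Definition inv_word (X : Type) (w : word X) : word X :=
  rev (map (fun p => (p.1, ~~ p.2)) w).

Definition rel_of (X : Type) (l r : word X) : word X := l ++ inv_word r.

Inductive weq (X : Type) (R : word X -> Prop) : word X -> word X -> Prop :=
| weq_refl w : weq R w w
| weq_sym w1 w2 : weq R w1 w2 -> weq R w2 w1
| weq_trans w1 w2 w3 : weq R w1 w2 -> weq R w2 w3 -> weq R w1 w3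
| weq_free u x b v : weq R (u ++ [:: (x, b); (x, ~~ b)] ++ v) (u ++ v)
| weq_rel u r v : R r -> weq R (u ++ r ++ v) (u ++ v).

(* generators a_{ij} of G_N^2: 2-element subsets of {1..N} (here 'I_N) *)
Definition gen2 (N : nat) := {S : {set 'I_N} | #|S| == 2}.

Definition RG (N : nat) (w : word (gen2 N)) : Prop :=
  (exists g : gen2 N, w = [:: (g, false); (g, false)])
  \/ (exists (i j k l : 'I_N) (g h : gen2 N),
        [/\ uniq [:: i; j; k; l], val g = [set i; j], val h = [set k; l] &
            w = rel_of [:: (g, false); (h, false)] [:: (h, false); (g, false)]])
  \/ (exists (i j k : 'I_N) (g1 g2 g3 : gen2 N),
        [/\ uniq [:: i; j; k], val g1 = [set i; j], val g2 = [set i; k],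
            val g3 = [set j; k] &
            w = rel_of [:: (g1, false); (g2, false); (g3, false)]
                       [:: (g3, false); (g2, false); (g1, false)]]).

(* the normal generators of N in G_{n+1}^2 (last index n+1 is ord_max) *)
Definition RN (n : nat) (w : word (gen2 n.+1)) : Prop :=
  exists (i j : 'I_n) (g h : gen2 n.+1),
    [/\ val g = [set widen_ord (leqnSn n) i; ord_max],
        val h = [set widen_ord (leqnSn n) j; ord_max] &
        w = [:: (g, false); (h, false); (g, true); (h, true)]].

Definition RQ (n : nat) (w : word (gen2 n.+1)) : Prop := @RG n.+1 w \/ RN w.

(* generators of G_{n,D}^2 : inl = a_{ij}, inr i = tau_i *)
Definition genD (n : nat) := (gen2 n + 'I_n)%type.

Definition RGD (n : nat) (w : word (genD n)) : Prop :=
  (exists w' : word (gen2 n), @RG n w' /\ w = map (fun p => (inl p.1, p.2)) w')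
  \/ (exists i : 'I_n, w = [:: (inr i, false); (inr i, false)])
  \/ (exists i j : 'I_n,
        w = rel_of [:: (inr i, false); (inr j, false)]
                   [:: (inr j, false); (inr i, false)])
  \/ (exists (i j : 'I_n) (g : gen2 n),
        [/\ i != j, val g = [set i; j] &
            w = rel_of [:: (inr i, false); (inr j, false); (inl g, false);
                           (inr j, false); (inr i, false)] [:: (inl g, false)]])
  \/ (exists (i j k : 'I_n) (g : gen2 n),
        [/\ uniq [:: i; j; k], val g = [set i; j] &
            w = rel_of [:: (inl g, false); (inr k, false)]
                       [:: (inr k, false); (inl g, false)]]).

Definition gen_letter (N : nat) (S : {set 'I_N}) (b : bool) : word (gen2 N) :=
  if @insub _ (fun S : {set 'I_N} => #|S| == 2) (gen2 N) S is Some g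
  then [:: (g, b)] else [::].

Definition kappa_letter (n : nat) (p : genD n * bool) : word (gen2 n.+1) :=
  match p.1 with
  | inl g => gen_letter [set widen_ord (leqnSn n) x | x in val g] p.2
  | inr i => gen_letter [set widen_ord (leqnSn n) i; ord_max] p.2
  end.

Definition kappa_word (n : nat) (w : word (genD n)) : word (gen2 n.+1) :=
  flatten (map (@kappa_letter n) w).

(* Main.v *)
Require Import Defs.
From mathcomp Require Import all_boot.
Set Implicit Arguments. Unset Strict Implicit. Unset Printing Implicit Defensive.

Section Weq.
Variable X : Type.
Variable R : word X -> Prop.

Lemma weq_ctx a b u v : weq R a b -> weq R (u ++ a ++ v) (u ++ b ++ v).
Proof.
elim=> {a b}.
- move=> w; exact: weq_refl.
- move=> w1 w2 _ IH; exact: weq_sym.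
- move=> w1 w2 w3 _ IH1 _ IH2; exact: weq_trans IH1 IH2.
- move=> u0 x b v0; have := weq_free R (u ++ u0) x b (v0 ++ v).
  by rewrite -!catA.
- move=> u0 r v0 Hr; have := weq_rel (u ++ u0) (v0 ++ v) Hr.
  by rewrite -!catA.
Qed.

Lemma weq_cat a b c d : weq R a b -> weq R c d -> weq R (a ++ c) (b ++ d).
Proof.
move=> H1 H2; apply: (weq_trans (w2 := b ++ c)).
  by have := weq_ctx [::] c H1.
by have := weq_ctx b [::] H2; rewrite !cats0.
Qed.

Lemma weq_r r : R r -> weq R r [::].
Proof. by move=> Hr; have := weq_rel [::] [::] Hr; rewrite /= !cats0. Qed.

Lemma weq_inv w : weq R (w ++ inv_word w) [::].
Proof.
elim: w => [|[x b] w IH] /=; first exact: weq_refl.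
rewrite /inv_word /= rev_cons -cats1 -/(inv_word w).
apply: (weq_trans (w2 := [:: (x, b)] ++ [:: (x, ~~ b)])).
  by have := weq_ctx [:: (x, b)] [:: (x, ~~ b)] IH; rewrite /= -catA.
by have := weq_free R [::] x b [::].
Qed.

Lemma weq_relof l r : weq R l r -> weq R (rel_of l r) [::].
Proof.
move=> H; rewrite /rel_of; apply: weq_trans (weq_inv r).
apply: weq_cat H (weq_refl _ _).
Qed.

Lemma relof_weq l r : R (rel_of l r) -> weq R l r.
Proof.
move=> H.
apply: (weq_trans (w2 := rel_of l r ++ r)).
  rewrite /rel_of -catA; have := weq_cat (weq_refl R l) (weq_sym (weq_inv (inv_word r))).
  suff -> : inv_word (inv_word r) = r by rewrite cats0.
  rewrite /inv_word map_rev revK -map_comp; elim: r {H} => //= [[? ?] ?] ->.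
  by rewrite negbK.
by have := weq_cat (weq_r H) (weq_refl R r).
Qed.

End Weq.

Section Kappa.
Variable n : nat.
Definition wid (i : 'I_n) : 'I_n.+1 := widen_ord (leqnSn n) i.

Lemma wid_inj : injective wid.
Proof. by move=> a b H; apply/val_inj; exact: (congr1 val H). Qed.

Lemma wid_max i : (wid i == ord_max) = false.
Proof. by apply/negbTE; rewrite -(inj_eq val_inj) /= neq_ltn ltn_ord. Qed.

Lemma card_t (i : 'I_n) : #|[set wid i; ord_max]| == 2.
Proof. by rewrite cards2 eq_sym wid_max. Qed.

Definition tg i : gen2 n.+1 := exist _ [set wid i; ord_max] (card_t i).

Lemma card_phi (g : gen2 n) : #|[set wid x | x in val g]| == 2.
Proof. by rewrite card_imset; [exact: (valP g) | exact: wid_inj]. Qed.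

Definition phi (g : gen2 n) : gen2 n.+1 := exist _ [set wid x | x in val g] (card_phi g).

Lemma gen_letterE N (S : {set 'I_N}) (H : #|S| == 2) b :
  gen_letter S b = [:: (Sub S H : gen2 N, b)].
Proof. by rewrite /gen_letter insubT. Qed.

Lemma kl_inl g b : kappa_letter (inl g, b) = [:: (phi g, b)].
Proof. exact: gen_letterE. Qed.

Lemma kl_inr i b : kappa_letter (inr i, b) = [:: (tg i, b)].
Proof. exact: gen_letterE. Qed.

Lemma kl_single p : kappa_letter p = [:: ((match p.1 with inl g => phi g | inr i => tg i end), p.2)].
Proof. by case: p => [[g|i] b]; rewrite ?kl_inl ?kl_inr. Qed.

Lemma kw_cat (u v : word (genD n)) : kappa_word (u ++ v) = kappa_word u ++ kappa_word v.
Proof. by rewrite /kappa_word map_cat flatten_cat. Qed.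

Lemma kw_inv (w : word (genD n)) : kappa_word (inv_word w) = inv_word (kappa_word w).
Proof.
elim: w => [|p w IH] //=.
rewrite /inv_word /= rev_cons -cats1 kw_cat -/(inv_word w) IH.
rewrite [kappa_word (p :: w)]/kappa_word /= -/(kappa_word w).
rewrite /kappa_word /= cats0 !kl_single /= rev_cons -cats1.
by [].
Qed.

Lemma kw_relof (l r : word (genD n)) : kappa_word (rel_of l r) = rel_of (kappa_word l) (kappa_word r).
Proof. by rewrite /rel_of kw_cat kw_inv. Qed.

Lemma kw_map (w : word (gen2 n)) : kappa_word (map (fun p => (inl p.1, p.2)) w)
   = map (fun p => (phi p.1, p.2)) w.
Proof. by elim: w => [|[g b] w IH] //=; rewrite -IH /kappa_word /= kl_inl. Qed.

Lemma map_relof (Y Z : Type) (f : Y -> Z) l r :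
  map (fun p => (f p.1, p.2)) (rel_of l r) =
  rel_of (map (fun p => (f p.1, p.2)) l) (map (fun p => (f p.1, p.2)) r).
Proof.
rewrite /rel_of /inv_word map_cat map_rev -!map_comp.
by [].

Qed.

Lemma val_phi (g : gen2 n) i j : val g = [set i; j] -> val (phi g) = [set wid i; wid j].
Proof. by move=> H; rewrite /= H imsetU1 imset_set1. Qed.

End Kappa.

Lemma rel_ok (n : nat) (r : word (genD n)) : RGD r -> weq (@RQ n) (kappa_word r) [::].
Proof.
case=> [[w' [Hw' ->]] | [[i ->] | [[i [j ->]] | [[i [j [g [Hij Hg ->]]]] | [i [j [k [g [Hu Hg ->]]]]]]]]].
- rewrite kw_map; apply: weq_r; left.
  case: Hw' => [[g ->] | [[i [j [k [l [g [h [Hu Hg Hh ->]]]]]]] | [i [j [k [g1 [g2 [g3 [Hu H1 H2 H3 ->]]]]]]]]].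
  + by left; exists (phi g).
  + right; left; rewrite map_relof /=.
    exists (wid i), (wid j), (wid k), (wid l), (phi g), (phi h); split.
    * by move: Hu; rewrite -(map_inj_uniq (@wid_inj n)).
    * exact: val_phi.
    * exact: val_phi.
    * by [].
  + right; right; rewrite map_relof /=.
    exists (wid i), (wid j), (wid k), (phi g1), (phi g2), (phi g3); split.
    * by move: Hu; rewrite -(map_inj_uniq (@wid_inj n)).
    * exact: val_phi.
    * exact: val_phi.
    * exact: val_phi.
    * by [].
- rewrite /kappa_word /= !kl_inr; apply: weq_r; left; left; by exists (tg i).
- rewrite kw_relof /kappa_word /= !kl_inr; apply: weq_r; right.
  by exists i, j, (tg i), (tg j); split.
- rewrite kw_relof /kappa_word /= !kl_inr !kl_inl /=; apply: weq_relof.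
  set a := phi g; set ti := tg i; set tj := tg j.
  have T : weq (@RQ n) [:: (a, false); (ti, false); (tj, false)]
                       [:: (tj, false); (ti, false); (a, false)].
    apply: relof_weq; left; right; right.
    exists (wid i), (wid j), ord_max, a, ti, tj; split => //.
      rewrite /= !inE (inj_eq (@wid_inj n)) !wid_max. by rewrite orbF Hij.
    by rewrite /a; exact: val_phi.
  have C : weq (@RQ n) [:: (ti, false); (tj, false)] [:: (tj, false); (ti, false)].
    apply: relof_weq; right; by exists i, j, ti, tj; split.
  have S : forall t : gen2 n.+1, weq (@RQ n) [:: (t, false); (t, false)] [::].
    by move=> t; apply: weq_r; left; left; exists t.
  apply: (weq_trans (w2 := [:: (tj, false); (ti, false)] ++ [:: (a, false); (tj, false); (ti, false)])).
    exact: (weq_cat C (weq_refl _ _)).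
  apply: (weq_trans (w2 := [:: (a, false); (ti, false); (tj, false)] ++ [:: (tj, false); (ti, false)])).
    exact: (weq_cat (weq_sym T) (weq_refl _ _)).
  apply: (weq_trans (w2 := [:: (a, false); (ti, false)] ++ [::] ++ [:: (ti, false)])).
    exact: (weq_ctx [:: (a, false); (ti, false)] [:: (ti, false)] (S tj)).
  have := weq_ctx [:: (a, false)] [::] (S ti); by [].
- rewrite kw_relof /kappa_word /= !kl_inr !kl_inl /=; apply: weq_r; left; right; left.
  exists (wid i), (wid j), (wid k), ord_max, (phi g), (tg k); split => //.
  + move: Hu; rewrite /= !inE !(inj_eq (@wid_inj n)) !wid_max.
    by rewrite !orbF.
  + exact: val_phi.
Qed.

Theorem mainTheorem7 (n : nat) (hn : 2 < n) (w1 w2 : word (genD n)) :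
  weq (@RGD n) w1 w2 -> weq (@RQ n) (kappa_word w1) (kappa_word w2).
Proof.
elim=> {w1 w2}.
- move=> w; exact: weq_refl.
- move=> w1 w2 _ IH; exact: weq_sym.
- move=> w1 w2 w3 _ IH1 _ IH2; exact: weq_trans IH1 IH2.
- move=> u x b v; rewrite !kw_cat.
  have -> : kappa_word [:: (x, b); (x, ~~ b)] =
     [:: ((match x with inl g => phi g | inr i => tg i end), b);
         ((match x with inl g => phi g | inr i => tg i end), ~~ b)].
    by rewrite /kappa_word /= !kl_single.
  exact: weq_free.
- move=> u r v Hr; rewrite !kw_cat.
  by have := weq_ctx (kappa_word u) (kappa_word v) (rel_ok Hr).
Qed.
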